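(* Let $p$ be a prime number and let $q_1<q_2<q_3$ be primes such that $q_1q_2q_3$ is coprime to $p(p-1)$. (a) Let $f(x)=x^{q_1q_2}\prod_{i=1}^{q_1}(x+p^i)^{q_1q_3}(x+p^{q_1+1})^{q_2q_3}\in\mathbb{Z}[x]$. Then $R(f)$ is dense in $\mathbb{Q}_p$; and for all but finitely many primes $q$, in particular for every prime $q>p^{q_1+1}$, $R(f)$ is not dense in $\mathbb{Q}_q$. (b) Let $$g_2(x_1,x_2)=x_1^{q_1q_2}\prod_{i=1}^{q_1}(x_1+p^ix_2)^{q_1q_3}(x_1+p^{q_1+1}x_2)^{q_2q_3}\prod_{i=1}^{q_3-1}(p^ix_1+x_2)^{q_1q_2}\prod_{i=q_3}^{q_3+q_2-q_1-1}(p^ix_1+x_2)^{q_1q_3}\prod_{i=q_3+q_2-q_1}^{q_3+q_2-2}(p^ix_1+x_2)^{q_2q_3}.$$ Then $R(g_2)$ is dense in $\mathbb{Q}_p$; and for all but finitely many primes $q$, in particular for every prime $q>p^{q_3+q_2+q_1-1}$, $R(g_2)$ is not dense in $\mathbb{Q}_q$. (c) Let $n>2$ be an integer and $g_n(x_1,\ldots,x_n)=g_2(x_1,x_2)(x_3\cdots x_n)^{q_1q_2q_3}$. Then $R(g_n)$ is dense in $\mathbb{Q}_p$; and for all but finitely many primes $q$, in particular for every prime $q>p^{q_3+q_2+q_1-1}$, $R(g_n)$ is not dense in $\mathbb{Q}_q$.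
   Context: For a polynomial $h\in\mathbb{Z}[x_1,\dots,x_r]$, $R(h)=\{h(\overline{x})/h(\overline{y}) : \overline{x},\overline{y}\in\mathbb{Z}^r,\ h(\overline{y})\neq 0\}$, and density is in the $p$-adic (resp. $q$-adic) topology. *)

(* Defs.v *)
From mathcomp Require Import all_boot all_order all_algebra.
Set Implicit Arguments. Unset Strict Implicit. Unset Printing Implicit Defensive.
Import Order.TTheory GRing.Theory Num.Theory.
Local Open Scope ring_scope.

Definition padic_val (p : nat) (r : rat) : int :=
  (logn p `|numq r|%N)%:Z - (logn p `|denq r|%N)%:Z.

(* A set S of rationals is dense in Q_p.  Since Q is dense in Q_p, this is
   equivalent to: every rational r can be approximated p-adically to any
   precision p^-k by elements of S. *)
Definition dense_Qp (p : nat) (S : rat -> Prop) : Prop :=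
  forall (r : rat) (k : nat), exists s : rat,
    S s /\ (s = r \/ k%:Z <= padic_val p (s - r)).

(* R(h) = { h(x)/h(y) : x, y integer points, h(y) <> 0 }, where the
   polynomial h is given through its evaluation map on integer points. *)
Definition Rset (X : Type) (h : X -> int) : rat -> Prop :=
  fun s => exists x y : X, h y != 0 /\ s = (h x)%:~R / (h y)%:~R.

Definition f_poly (p q1 q2 q3 : nat) (x : int) : int :=
  x ^+ (q1 * q2)%N
  * (\prod_(1 <= i < q1.+1) (x + (p%:Z) ^+ i) ^+ (q1 * q3)%N)
  * (x + (p%:Z) ^+ q1.+1) ^+ (q2 * q3)%N.

Definition g2_poly (p q1 q2 q3 : nat) (x1 x2 : int) : int :=
  x1 ^+ (q1 * q2)%N
  * (\prod_(1 <= i < q1.+1) (x1 + (p%:Z) ^+ i * x2) ^+ (q1 * q3)%N)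
  * (x1 + (p%:Z) ^+ q1.+1 * x2) ^+ (q2 * q3)%N
  * (\prod_(1 <= i < q3) ((p%:Z) ^+ i * x1 + x2) ^+ (q1 * q2)%N)
  * (\prod_(q3 <= i < q3 + q2 - q1) ((p%:Z) ^+ i * x1 + x2) ^+ (q1 * q3)%N)
  * (\prod_(q3 + q2 - q1 <= i < q3 + q2 - 1) ((p%:Z) ^+ i * x1 + x2) ^+ (q2 * q3)%N).

Definition g2_fun (p q1 q2 q3 : nat) (x : int * int) : int :=
  g2_poly p q1 q2 q3 x.1 x.2.

(* coordinate i (0-indexed) of a point of Z^n, 0 if out of range *)
Definition coord (n : nat) (x : 'I_n -> int) (i : nat) : int :=
  if insub i is Some j then x j else 0.

Definition gn_fun (p q1 q2 q3 n : nat) (x : 'I_n -> int) : int :=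
  g2_poly p q1 q2 q3 (coord x 0) (coord x 1)
  * (\prod_(2 <= i < n) coord x i) ^+ (q1 * q2 * q3)%N.
Arguments gn_fun : clear implicits.

(* Main.v *)
Require Import Defs.
From mathcomp Require Import all_boot all_order all_algebra.
From mathcomp Require Import zify ring.
From mathcomp Require Import cyclic.
Import Order.TTheory GRing.Theory Num.Theory.
Set Implicit Arguments. Unset Strict Implicit. Unset Printing Implicit Defensive.
Local Open Scope ring_scope.

Definition lz (p : nat) (z : int) : nat := logn p `|z|%N.

Lemma lzM p a b : a != 0 -> b != 0 -> lz p (a * b) = (lz p a + lz p b)%N.
Proof. by move=> a0 b0; rewrite /lz abszM lognM // absz_gt0. Qed.

Lemma lzX p a e : lz p (a ^+ e) = (e * lz p a)%N.
Proof. by rewrite /lz abszX lognX. Qed.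

Lemma lz_pexp p c : prime p -> lz p ((p%:Z) ^+ c) = c.
Proof. by move=> pp; rewrite /lz abszX absz_nat pfactorK. Qed.

Lemma lz_unit p z : prime p -> ~~ (p%:Z %| z)%Z -> lz p z = 0%N.
Proof. by move=> pp nd; rewrite /lz logn_coprime // prime_coprime. Qed.

Lemma lz_dvdE p K z : prime p -> z != 0 -> ((p%:Z)^+K %| z)%Z = (K <= lz p z)%N.
Proof. by move=> pp z0; rewrite dvdzE abszX absz_nat pfactor_dvdn // absz_gt0. Qed.

Lemma padic_frac p a b : a != 0 -> b != 0 ->
  padic_val p (a%:~R / b%:~R) = (lz p a)%:Z - (lz p b)%:Z.
Proof.
move=> a0 b0; set r := _ / _.
have r0 : r != 0 by rewrite mulf_neq0 ?invr_eq0 ?intr_eq0.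
have e : numq r * b = a * denq r.
  apply: (@intr_inj rat); rewrite !rmorphM /= numqE /r.
  by rewrite mulrAC divfK ?intr_eq0.
have := congr1 (lz p) e; rewrite !lzM ?numq_eq0 ?denq_neq0 // => e2.
rewrite /padic_val -/(lz p (numq r)) -/(lz p (denq r)); lia.
Qed.

Definition Mset (q1 q2 q3 : nat) (n : nat) : bool :=
  [|| (q1*q2 %| n)%N, (q1*q3 %| n)%N | (q2*q3 %| n)%N].

Lemma dvd2 x y n : (x * y %| n)%N -> (x %| n)%N /\ (y %| n)%N.
Proof.
move=> h; split; apply: dvdn_trans h; [exact: dvdn_mulr | exact: dvdn_mull].
Qed.

Lemma M_not_succ q1 q2 q3 a : prime q1 -> prime q2 -> prime q3 ->
  Mset q1 q2 q3 a -> Mset q1 q2 q3 a.+1 -> False.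
Proof.
move=> p1 p2 p3 Ha Hb.
have key : forall x, prime x -> (x %| a)%N -> (x %| a.+1)%N -> False.
  move=> x px h1; rewrite -addn1 dvdn_addr // dvdn1 => /eqP x1.
  by have := prime_gt1 px; rewrite x1.
case/or3P: Ha => /dvd2[? ?]; case/or3P: Hb => /dvd2[? ?];
  first [exact: (key q1) | exact: (key q2) | exact: (key q3)].
Qed.

Lemma lz_nat q : prime q -> lz q (q%:Z) = 1%N.
Proof. by move=> pq; have := @lz_pexp q 1 pq; rewrite expr1. Qed.

Lemma nondense_gen (X : Type) (h : X -> int) q q1 q2 q3 :
  prime q -> prime q1 -> prime q2 -> prime q3 ->
  (forall x, h x != 0 -> Mset q1 q2 q3 (lz q (h x))) ->
  ~ dense_Qp q (Rset h).
Proof.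
move=> pq p1 p2 p3 HM D.
have [s [[x [y [hy se]]] H]] := D (q%:Q) 2%N.
have q0 : q%:Z != 0 by have := prime_gt0 pq; lia.
have q0' : (q%:Q) != 0 by rewrite pnatr_eq0; have := prime_gt0 pq; lia.
have eqcase : h x = q%:Z * h y -> False.
  move=> e; have hx0 : h x != 0 by rewrite e mulf_neq0.
  have := HM _ hx0; have := HM _ hy; rewrite e lzM // lz_nat // add1n.
  move=> Mb Ma. exact: (@M_not_succ q1 q2 q3 _ p1 p2 p3 Mb Ma).
have eqs : s = q%:Q -> False.
  move=> sq; apply: eqcase; apply: (@intr_inj rat).
  by rewrite rmorphM /= -sq se divfK ?intr_eq0.
case: H => [//|H].
have [hx0|hx0] := eqVneq (h x) 0.
  move: H; rewrite se hx0 mul0r add0r.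
  have -> : - (q%:Q) = (- q%:Z)%:~R / (1%:Z)%:~R by rewrite divr1 rmorphN.
  rewrite padic_frac ?oppr_eq0 //.
  rewrite /lz abszN absz_nat; have := @lz_nat q pq; rewrite /lz absz_nat => ->.
  have : logn q `|1%Z| = 0%N by rewrite logn1.
  lia.
have [d0|d0] := eqVneq (h x - q%:Z * h y) 0.
  by apply: eqcase; apply/eqP; rewrite -subr_eq0 d0.
move: H; have -> : s - q%:Q = (h x - q%:Z * h y)%:~R / (h y)%:~R.
  by rewrite se rmorphB rmorphM /=; field; rewrite intr_eq0.
rewrite padic_frac // => H2.
set a := lz q (h x) in HM; set b := lz q (h y).
have Hd : ((q%:Z) ^+ b.+2 %| h x - q%:Z * h y)%Z by rewrite lz_dvdE //; lia.
have Hy : ((q%:Z) ^+ b %| h y)%Z by rewrite lz_dvdE.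
have Hqy : ((q%:Z) ^+ b.+1 %| q%:Z * h y)%Z by rewrite exprS dvdz_mul2l.
have Hb1 : ((q%:Z) ^+ b.+1 %| h x)%Z.
  have -> : h x = (h x - q%:Z * h y) + q%:Z * h y by rewrite subrK.
  apply: rpredD => //; apply: dvdz_trans Hd; exact: dvdz_exp2l.
have : (b.+1 <= a)%N by rewrite -lz_dvdE.
rewrite leq_eqVlt => /orP[/eqP ab|ab].
  have := HM _ hy; have := HM _ hx0; rewrite -/a -ab => Ma Mb.
  exact: (@M_not_succ q1 q2 q3 _ p1 p2 p3 Mb Ma).
have : ((q%:Z) ^+ b.+2 %| q%:Z * h y)%Z.
  have -> : q%:Z * h y = h x - (h x - q%:Z * h y) by rewrite opprB addrC subrK.
  by apply: rpredB => //; rewrite lz_dvdE.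
rewrite exprS dvdz_mul2l // lz_dvdE //; lia.
Qed.

Lemma pexpz (p i : nat) : (p%:Z) ^+ i = (p ^ i)%N%:Z.
Proof. by elim: i => // i IH; rewrite exprS IH expnS PoszM. Qed.

Lemma small_ndvd q z : (0 < `|z|)%N -> (`|z| < q)%N -> ~~ (q%:Z %| z)%Z.
Proof.
move=> h1 h2; rewrite dvdzE absz_nat; apply/negP => /(dvdn_leq h1); lia.
Qed.

Lemma NP p q i B : prime p -> (i <= B)%N -> (p ^ B < q)%N ->
  ~~ (q%:Z %| (p%:Z) ^+ i)%Z.
Proof.
move=> pp iB hq; rewrite pexpz; apply: small_ndvd; rewrite absz_nat.
  by rewrite expn_gt0 prime_gt0.
by apply: leq_ltn_trans hq; rewrite leq_pexp2l // prime_gt0.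
Qed.

Lemma ND p q i j B : prime p -> (i <= B)%N -> (j <= B)%N -> i != j ->
  (p ^ B < q)%N -> ~~ (q%:Z %| (p%:Z) ^+ i - (p%:Z) ^+ j)%Z.
Proof.
move=> pp.
wlog ij : i j / (i < j)%N.
  move=> W iB jB nij hq; case: (ltngtP i j) => h.
  - exact: W.
  - by rewrite -rpredN opprB; apply: W => //; rewrite eq_sym.
  - by rewrite h eqxx in nij.
move=> iB jB _ hq; rewrite -rpredN opprB !pexpz subzn; last first.
  by rewrite leq_pexp2l ?prime_gt0 // ltnW.
have p1 := prime_gt1 pp.
have hlt : (p ^ i < p ^ j)%N by rewrite ltn_exp2l.
have hle : (p ^ j <= p ^ B)%N by rewrite leq_pexp2l ?prime_gt0.
apply: small_ndvd; rewrite absz_nat; lia.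
Qed.

Lemma NS p q k B : prime p -> (1 <= k)%N -> (k <= B)%N -> (p ^ B < q)%N ->
  ~~ (q%:Z %| 1 - (p%:Z) ^+ k)%Z.
Proof.
move=> pp k1 kB hq; rewrite -rpredN opprB pexpz.
have p1 := prime_gt1 pp.
have hlt : (p ^ 0 < p ^ k)%N by rewrite ltn_exp2l.
have hle : (p ^ k <= p ^ B)%N by rewrite leq_pexp2l ?prime_gt0.
rewrite expn0 in hlt.
rewrite -[1]/(1%N%:Z) subzn ?(ltnW hlt) //.
apply: small_ndvd; rewrite absz_nat; lia.
Qed.

Lemma EuclidZ q a b : prime q -> (q%:Z %| a * b)%Z ->
  (q%:Z %| a)%Z || (q%:Z %| b)%Z.
Proof. by move=> pq; rewrite !dvdzE abszM Euclid_dvdM. Qed.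

Lemma lz_prod q (r : seq nat) (F : nat -> int) :
  \prod_(i <- r) F i != 0 ->
  lz q (\prod_(i <- r) F i) = (\sum_(i <- r) lz q (F i))%N.
Proof.
elim: r => [|i r IH]; first by rewrite !big_nil /lz logn1.
rewrite !big_cons mulf_eq0 negb_or => /andP[h1 h2].
by rewrite lzM // IH.
Qed.

Lemma lz0 q z : prime q -> ~~ (q%:Z %| z)%Z -> lz q z = 0%N.
Proof. exact: lz_unit. Qed.

Lemma Mf p q q1 q2 q3 x : prime p -> prime q -> (p ^ q1.+1 < q)%N ->
  f_poly p q1 q2 q3 x != 0 -> Mset q1 q2 q3 (lz q (f_poly p q1 q2 q3 x)).
Proof.
move=> pp pq hq H; have := H; rewrite /f_poly.
rewrite !mulf_eq0 !negb_or => /andP[/andP[h1 h2] h3].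
rewrite !lzM ?mulf_neq0 // !lzX lz_prod //.
under eq_bigr do rewrite lzX.
have Hn : forall i, (i <= q1.+1)%N -> (q%:Z %| x)%Z ->
    ~~ (q%:Z %| x + (p%:Z) ^+ i)%Z.
  move=> i iB hx; apply/negP => hxi.
  have : (q%:Z %| (x + (p%:Z) ^+ i) - x)%Z by apply: rpredB.
  by rewrite addrC addKr; apply/negP; apply: NP hq.
have [hx|hx] := boolP (q%:Z %| x)%Z.
  rewrite big1_seq; last first.
    move=> i /andP[_]; rewrite mem_index_iota => /andP[_ hi].
    by rewrite lz0 ?muln0 // Hn // ltnW.
  rewrite (@lz0 q _ pq (Hn _ (leqnn _) hx)) muln0 !addn0.
  by apply/or3P; apply: Or31; apply: dvdn_mulr.
rewrite (@lz0 q _ pq hx) muln0 add0n.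
have [hL|hL] := boolP (q%:Z %| x + (p%:Z) ^+ q1.+1)%Z.
  rewrite big1_seq; last first.
    move=> i /andP[_]; rewrite mem_index_iota => /andP[i1 hi].
    rewrite (@lz0 q) ?muln0 //; apply/negP => hxi.
    have : (q%:Z %| (x + (p%:Z) ^+ q1.+1) - (x + (p%:Z) ^+ i))%Z.
      by apply: rpredB.
    rewrite opprD addrACA subrr add0r; apply/negP; apply: ND hq => //.
    by rewrite ltnW. by rewrite gtn_eqF.
  by rewrite add0n; apply/or3P; apply: Or33; apply: dvdn_mulr.
rewrite (@lz0 q _ pq hL) muln0 addn0.
by apply/or3P; apply: Or32; apply: dvdn_sum => i _; apply: dvdn_mulr.
Qed.

Lemma exp_arith q1 q2 q3 : (0 < q1)%N -> (q1 < q2)%N -> (q2 < q3)%N ->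
  (3 * (q1 * q2 * q3) = q1 * q2 + (q1 * q3) * (q1.+1 - 1) + q2 * q3
   + (q1 * q2) * (q3 - 1) + (q1 * q3) * (q3 + q2 - q1 - q3)
   + (q2 * q3) * (q3 + q2 - 1 - (q3 + q2 - q1)))%N.
Proof.
move=> h1 h2 h3.
have -> : (q1.+1 - 1 = q1)%N by lia.
have -> : (q3 + q2 - q1 - q3 = q2 - q1)%N by lia.
have -> : (q3 + q2 - 1 - (q3 + q2 - q1) = q1 - 1)%N by lia.
case: q1 h1 h2 => // r1 _ h2.
case: q3 h3 => // r3 h3.
have [d ->] : exists d, q2 = (r1.+1 + d)%N by exists (q2 - r1.+1)%N; lia.
rewrite !subSS !subn0 addKn; ring.
Qed.

Lemma g2_hom p q1 q2 q3 (t a b : int) : (0 < q1)%N -> (q1 < q2)%N -> (q2 < q3)%N ->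
  g2_poly p q1 q2 q3 (t * a) (t * b) =
  t ^+ (3 * (q1 * q2 * q3)) * g2_poly p q1 q2 q3 a b.
Proof.
move=> h1 h2 h3; rewrite /g2_poly.
have E1 : forall i, t * a + (p%:Z) ^+ i * (t * b) = t * (a + (p%:Z) ^+ i * b).
  by move=> i; ring.
have E2 : forall i, (p%:Z) ^+ i * (t * a) + t * b = t * ((p%:Z) ^+ i * a + b).
  by move=> i; ring.
under eq_bigr do rewrite E1 exprMn.
under [X in _ * X * _ * _]eq_bigr do rewrite E2 exprMn.
under [X in _ * X * _]eq_bigr do rewrite E2 exprMn.
under [X in _ * X]eq_bigr do rewrite E2 exprMn.
rewrite E1 !big_split /= !prodr_const_nat -!exprM (@exp_arith q1 q2 q3 h1 h2 h3) !exprD.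
rewrite !exprMn; ring.
Qed.

Section Pairs.
Variables (q : nat) (x1 x2 : int).
Hypothesis pq : prime q.
Local Notation "a ||| b" := (a%:Z %| b)%Z (at level 70).

Lemma dvd_sub (a b : int) : q ||| a -> q ||| b -> q ||| a - b.
Proof. exact: rpredB. Qed.

Lemma P1 u : ~~ (q ||| u) -> q ||| x1 -> q ||| x1 + u * x2 -> q ||| x2.
Proof.
move=> nu h1 h2; have := dvd_sub h2 h1; rewrite addrC addKr.
by move/(EuclidZ pq)/orP => [h|//]; rewrite h in nu.
Qed.

Lemma P2 u : q ||| x1 -> q ||| u * x1 + x2 -> q ||| x2.
Proof.
move=> h1 h2; have := dvd_sub h2 (dvdz_mull u h1); by rewrite addrC addKr.
Qed.

Lemma P3 u v : ~~ (q ||| u - v) -> q ||| x1 + u * x2 -> q ||| x1 + v * x2 -> q ||| x2.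
Proof.
move=> nu h1 h2; have := dvd_sub h1 h2.
have -> : x1 + u * x2 - (x1 + v * x2) = (u - v) * x2 by ring.
by move/(EuclidZ pq)/orP => [h|//]; rewrite h in nu.
Qed.

Lemma P4 u v : ~~ (q ||| 1 - u * v) -> q ||| x1 + u * x2 -> q ||| v * x1 + x2 -> q ||| x2.
Proof.
move=> nu h1 h2; have := dvd_sub h2 (dvdz_mull v h1).
have -> : v * x1 + x2 - v * (x1 + u * x2) = (1 - u * v) * x2 by ring.
by move/(EuclidZ pq)/orP => [h|//]; rewrite h in nu.
Qed.

Lemma P5 u v : ~~ (q ||| u - v) -> q ||| u * x1 + x2 -> q ||| v * x1 + x2 -> q ||| x1.
Proof.
move=> nu h1 h2; have := dvd_sub h1 h2.
have -> : u * x1 + x2 - (v * x1 + x2) = (u - v) * x1 by ring.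
by move/(EuclidZ pq)/orP => [h|//]; rewrite h in nu.
Qed.

Lemma Q1 u : q ||| x2 -> q ||| x1 + u * x2 -> q ||| x1.
Proof. by move=> h2 h1; have := dvd_sub h1 (dvdz_mull u h2); rewrite addrK. Qed.

Lemma Q2 u : q ||| x1 -> q ||| u * x1 + x2 -> q ||| x2.
Proof. exact: P2. Qed.

End Pairs.

Lemma sum_zero q (r : seq nat) (L : nat -> int) e : prime q ->
  ~~ has (fun i => (q%:Z %| L i)%Z) r -> (\sum_(i <- r) lz q (L i ^+ e) = 0)%N.
Proof.
move=> pq /hasPn H; rewrite big1_seq // => i /andP[_ hi].
by rewrite lzX lz0 ?muln0 //; exact: H.
Qed.

Lemma sum_dvd q (r : seq nat) (L : nat -> int) e :
  (e %| \sum_(i <- r) lz q (L i ^+ e))%N.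
Proof. by apply: dvdn_sum => i _; rewrite lzX dvdn_mulr. Qed.

Lemma Mg2_core p q q1 q2 q3 x1 x2 : prime p -> prime q ->
  (0 < q1)%N -> (q1 < q2)%N -> (q2 < q3)%N ->
  (p ^ (q3 + q2 + q1 - 1) < q)%N ->
  ~~ ((q%:Z %| x1)%Z && (q%:Z %| x2)%Z) ->
  g2_poly p q1 q2 q3 x1 x2 != 0 ->
  Mset q1 q2 q3 (lz q (g2_poly p q1 q2 q3 x1 x2)).
Proof.
move=> pp pq q10 h12 h23 hq nb H; have := H; rewrite /g2_poly.
rewrite !mulf_eq0 !negb_or => /andP[/andP[/andP[/andP[/andP[h1 h2] h3] h4] h5] h6].
rewrite !lzM ?mulf_neq0 // !lzX !lz_prod //.
set E := (q3 + q2 + q1 - 1)%N in hq.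
pose d12 := (q%:Z %| x1)%Z ||
  has (fun i => (q%:Z %| (p%:Z) ^+ i * x1 + x2)%Z) (index_iota 1 q3).
pose d13 := has (fun i => (q%:Z %| x1 + (p%:Z) ^+ i * x2)%Z) (index_iota 1 q1.+1) ||
  has (fun i => (q%:Z %| (p%:Z) ^+ i * x1 + x2)%Z) (index_iota q3 (q3 + q2 - q1)).
pose d23 := (q%:Z %| x1 + (p%:Z) ^+ q1.+1 * x2)%Z ||
  has (fun i => (q%:Z %| (p%:Z) ^+ i * x1 + x2)%Z) (index_iota (q3 + q2 - q1) (q3 + q2 - 1)).
have both : (q%:Z %| x1)%Z -> (q%:Z %| x2)%Z -> False.
  by move=> a b; move: nb; rewrite a b.
clear nb H h1 h2 h3 h4 h5 h6.
have NPp : forall i, (i <= E)%N -> ~~ (q%:Z %| (p%:Z) ^+ i)%Z.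
  by move=> i hi; apply: NP hq.
have NDp : forall i j, (i <= E)%N -> (j <= E)%N -> i != j ->
    ~~ (q%:Z %| (p%:Z) ^+ i - (p%:Z) ^+ j)%Z.
  by move=> i j hi hj nij; apply: ND hq.
have NSp : forall i j, (1 <= i + j)%N -> (i + j <= E)%N ->
    ~~ (q%:Z %| 1 - (p%:Z) ^+ i * (p%:Z) ^+ j)%Z.
  by move=> i j h1' h2'; rewrite -exprD; apply: NS hq.
have x1A : forall u, (q%:Z %| x1)%Z -> ~~ (q%:Z %| u)%Z -> (q%:Z %| x1 + u * x2)%Z -> False.
  move=> u a nu b; apply: (both a); exact (P1 pq nu a b).
have x1B : forall u, (q%:Z %| x1)%Z -> (q%:Z %| u * x1 + x2)%Z -> False.
  move=> u a b; apply: (both a); exact (P2 a b).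
have AB : forall u v, ~~ (q%:Z %| 1 - u * v)%Z -> (q%:Z %| x1 + u * x2)%Z ->
    (q%:Z %| v * x1 + x2)%Z -> False.
  move=> u v nu a b; have c := P4 pq nu a b; apply: (both _ c); exact: Q1 c a.
have AA : forall u v, ~~ (q%:Z %| u - v)%Z -> (q%:Z %| x1 + u * x2)%Z ->
    (q%:Z %| x1 + v * x2)%Z -> False.
  move=> u v nu a b; have c := P3 pq nu a b; apply: (both _ c); exact: Q1 c a.
have BB : forall u v, ~~ (q%:Z %| u - v)%Z -> (q%:Z %| u * x1 + x2)%Z ->
    (q%:Z %| v * x1 + x2)%Z -> False.
  move=> u v nu a b; have c := P5 pq nu a b; apply: (both c); exact: Q2 c a.
have e1213 : d12 -> d13 -> False.
  rewrite /d12 /d13; clear d12 d13 d23.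
  move=> D12 D13; case/orP: D12 => [a|/hasP[i]].
    case/orP: D13 => /hasP[j]; rewrite mem_index_iota => /andP[j1 j2] b.
      by apply: x1A a (NPp j _) b; lia.
    exact: x1B a b.
  rewrite mem_index_iota => /andP[i1 i2] a.
  case/orP: D13 => /hasP[j]; rewrite mem_index_iota => /andP[j1 j2] b.
    by apply: AB (NSp j i _ _) b a; lia.
  by apply: BB (NDp i j _ _ _) a b; [lia|lia|apply/eqP; lia].
have e1223 : d12 -> d23 -> False.
  rewrite /d12 /d23; clear e1213 d12 d13 d23.
  move=> D12 D23; case/orP: D12 => [a|/hasP[i]].
    case/orP: D23 => [b|/hasP[j]].
      by apply: x1A a (NPp q1.+1 _) b; lia.
    by rewrite mem_index_iota => _ b; exact: x1B a b.
  rewrite mem_index_iota => /andP[i1 i2] a.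
  case/orP: D23 => [b|/hasP[j]].
    by apply: AB (NSp q1.+1 i _ _) b a; lia.
  rewrite mem_index_iota => /andP[j1 j2] b.
  by apply: BB (NDp i j _ _ _) a b; [lia|lia|apply/eqP; lia].
have e1323 : d13 -> d23 -> False.
  rewrite /d13 /d23; clear e1213 e1223 d12 d13 d23.
  move=> D13 D23; case/orP: D13 => /hasP[i]; rewrite mem_index_iota => /andP[i1 i2] a.
    case/orP: D23 => [b|/hasP[j]].
      by apply: AA (NDp i q1.+1 _ _ _) a b; [lia|lia|apply/eqP; lia].
    rewrite mem_index_iota => /andP[j1 j2] b.
    by apply: AB (NSp i j _ _) a b; lia.
  case/orP: D23 => [b|/hasP[j]].
    by apply: AB (NSp q1.+1 i _ _) b a; lia.
  rewrite mem_index_iota => /andP[j1 j2] b.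
  by apply: BB (NDp i j _ _ _) a b; [lia|lia|apply/eqP; lia].
have z12 : ~~ d12 -> lz q x1 = 0%N /\
    (\sum_(i <- index_iota 1 q3) lz q (((p%:Z) ^+ i * x1 + x2) ^+ (q1 * q2)) = 0)%N.
  rewrite negb_or => /andP[a b]; split; first exact: lz0.
  exact: sum_zero.
have z13 : ~~ d13 ->
    (\sum_(i <- index_iota 1 q1.+1) lz q ((x1 + (p%:Z) ^+ i * x2) ^+ (q1 * q3)) = 0)%N /\
    (\sum_(i <- index_iota q3 (q3 + q2 - q1)) lz q (((p%:Z) ^+ i * x1 + x2) ^+ (q1 * q3)) = 0)%N.
  by rewrite negb_or => /andP[a b]; split; apply: sum_zero.
have z23 : ~~ d23 -> lz q (x1 + (p%:Z) ^+ q1.+1 * x2) = 0%N /\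
    (\sum_(i <- index_iota (q3 + q2 - q1) (q3 + q2 - 1))
       lz q (((p%:Z) ^+ i * x1 + x2) ^+ (q2 * q3)) = 0)%N.
  rewrite negb_or => /andP[a b]; split; first exact: lz0.
  exact: sum_zero.
apply/or3P.
have [D12|N12] := boolP d12.
  have N13 : ~~ d13 by apply/negP => /(e1213 D12).
  have N23 : ~~ d23 by apply/negP => /(e1223 D12).
  case: (z13 N13) => -> ->; case: (z23 N23) => -> ->.
  apply: Or31; rewrite !(addn0, add0n, muln0).
  by apply: dvdn_add; [apply: dvdn_mulr | apply: sum_dvd].
case: (z12 N12) => -> ->.
have [D13|N13] := boolP d13.
  have N23 : ~~ d23 by apply/negP => /(e1323 D13).
  case: (z23 N23) => -> ->.
  apply: Or32; rewrite !(addn0, add0n, muln0).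
  by apply: dvdn_add; apply: sum_dvd.
case: (z13 N13) => -> ->.
apply: Or33; rewrite !(addn0, add0n, muln0).
by apply: dvdn_add; [apply: dvdn_mulr | apply: sum_dvd].
Qed.

Lemma M_add q1 q2 q3 m n : (q1 * q2 * q3 %| m)%N -> Mset q1 q2 q3 n ->
  Mset q1 q2 q3 (m + n).
Proof.
move=> hm /or3P [h|h|h]; apply/or3P; [apply: Or31|apply: Or32|apply: Or33];
  apply: dvdn_add => //; apply: dvdn_trans hm.
- exact: dvdn_mulr.
- by rewrite mulnAC; apply: dvdn_mulr.
- by rewrite -mulnA; apply: dvdn_mull.
Qed.

Lemma g2_x10 p q1 q2 q3 x1 x2 : (0 < q1)%N -> (0 < q2)%N ->
  g2_poly p q1 q2 q3 x1 x2 != 0 -> x1 != 0.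
Proof.
move=> h1 h2; apply: contraNneq => ->.
have h : (q1 * q2 != 0)%N by rewrite muln_eq0 negb_or -!lt0n h1 h2.
by rewrite /g2_poly expr0n (negbTE h) !mul0r.
Qed.

Lemma Mg2 p q q1 q2 q3 : prime p -> prime q -> prime q1 -> prime q2 ->
  prime q3 -> (q1 < q2)%N -> (q2 < q3)%N ->
  (p ^ (q3 + q2 + q1 - 1) < q)%N -> forall x1 x2,
  g2_poly p q1 q2 q3 x1 x2 != 0 ->
  Mset q1 q2 q3 (lz q (g2_poly p q1 q2 q3 x1 x2)).
Proof.
move=> pp pq p1 p2 p3 h12 h23 hq.
have q10 := prime_gt0 p1; have q20 := prime_gt0 p2.
suff S : forall n x1 x2, (`|x1| <= n)%N -> g2_poly p q1 q2 q3 x1 x2 != 0 ->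
    Mset q1 q2 q3 (lz q (g2_poly p q1 q2 q3 x1 x2)).
  by move=> x1 x2; apply: S.
elim=> [|n IH] x1 x2 hn H.
  by have := g2_x10 q10 q20 H; rewrite -absz_eq0; move: hn; rewrite leqn0 => ->.
have [hb|hb] := boolP ((q%:Z %| x1)%Z && (q%:Z %| x2)%Z); last exact: Mg2_core.
move: hn H; case/andP: hb => /dvdzP[a ->] /dvdzP[b ->] hn H.
rewrite [a * _]mulrC [b * _]mulrC g2_hom // in H *.
have H' : g2_poly p q1 q2 q3 a b != 0.
  by move: H; rewrite mulf_eq0 negb_or => /andP[].
have q0 : q%:Z != 0 by have := prime_gt0 pq; lia.
rewrite lzM ?expf_neq0 // lz_pexp //; apply: M_add; first exact: dvdn_mull.
apply: (IH _ _ _ H').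
have := prime_gt1 pq; have : (0 < `|a|)%N by rewrite absz_gt0 (g2_x10 q10 q20 H').
move: hn; rewrite abszM absz_nat; nia.
Qed.

Lemma Mgn p q q1 q2 q3 n x : prime p -> prime q -> prime q1 -> prime q2 ->
  prime q3 -> (q1 < q2)%N -> (q2 < q3)%N ->
  (p ^ (q3 + q2 + q1 - 1) < q)%N ->
  gn_fun p q1 q2 q3 n x != 0 -> Mset q1 q2 q3 (lz q (gn_fun p q1 q2 q3 n x)).
Proof.
move=> pp pq p1 p2 p3 h12 h23 hq H; have := H; rewrite /gn_fun.
rewrite mulf_eq0 negb_or => /andP[h1 h2].
rewrite lzM // lzX addnC; apply: M_add; first exact: dvdn_mulr.
exact: Mg2.
Qed.

Lemma cmul (N a a' b b' : int) : (a = a' %[mod N])%Z -> (b = b' %[mod N])%Z ->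
  (a * b = a' * b' %[mod N])%Z.
Proof. by move=> ha hb; rewrite -modzMm ha hb modzMm. Qed.

Lemma cexp (N a a' : int) k : (a = a' %[mod N])%Z -> (a ^+ k = a' ^+ k %[mod N])%Z.
Proof. by move=> ha; rewrite -modzXm ha modzXm. Qed.

Lemma cadd (N a a' b b' : int) : (a = a' %[mod N])%Z -> (b = b' %[mod N])%Z ->
  (a + b = a' + b' %[mod N])%Z.
Proof. by move=> ha hb; rewrite -modzDm ha hb modzDm. Qed.

Lemma cprod (N : int) (r : seq nat) (F G : nat -> int) :
  (forall i, i \in r -> (F i = G i %[mod N])%Z) ->
  (\prod_(i <- r) F i = \prod_(i <- r) G i %[mod N])%Z.
Proof.
elim: r => [|i r IH] H; first by rewrite !big_nil.
rewrite !big_cons; apply: cmul; first by apply: H; rewrite inE eqxx.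
by apply: IH => j hj; apply: H; rewrite inE hj orbT.
Qed.

Lemma cdvd (N a b : int) : (a = b %[mod N])%Z -> (N %| a - b)%Z.
Proof. by move=> h; rewrite -eqz_mod_dvd h. Qed.

Lemma dvdc (N a b : int) : (N %| a - b)%Z -> (a = b %[mod N])%Z.
Proof. by move=> h; apply/eqP; rewrite eqz_mod_dvd. Qed.

Lemma cweak (N M a b : int) : (M %| N)%Z -> (a = b %[mod N])%Z -> (a = b %[mod M])%Z.
Proof. by move=> hMN /cdvd h; apply: dvdc; apply: dvdz_trans h. Qed.

Lemma pK0 (p K n : nat) (w : int) : (K <= n)%N ->
  ((p%:Z) ^+ n * w = 0 %[mod (p%:Z) ^+ K])%Z.
Proof.
move=> Kn; rewrite -(subnKC Kn) exprD -mulrA mod0z.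
by rewrite mulrC modzMl.
Qed.

Lemma cadd0 (N a b : int) : (a = 0 %[mod N])%Z -> (a + b = b %[mod N])%Z.
Proof. by move=> h; rewrite -modzDml h mod0z add0r. Qed.

Lemma lemA (a b : nat) (z : int) : coprime a b -> (0 < b)%N ->
  exists u : nat, (u < b)%N /\ (b%:Z %| z - u%:Z * a%:Z)%Z.
Proof.
move=> cab b0.
have [u [v e]] := Bezoutz a b.
have g1 : gcdz a b = 1 by rewrite /gcdz /= (eqP cab).
rewrite g1 in e.
have bz : b%:Z != 0 by lia.
set w := z * u.
have r0 : 0 <= (w %% b)%Z by apply: modz_ge0.
exists `|(w %% b)%Z|%N; split.
  by have := @ltz_pmod w b%:Z; lia.
rewrite gez0_abs //.
apply/dvdzP; exists (z * v + (w %/ b)%Z * a%:Z).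
have ew := divz_eq w b.
have -> : (w %% b)%Z = w - (w %/ b)%Z * b%:Z by rewrite {2}ew addrC addKr.
apply/eqP; rewrite -subr_eq0; apply/eqP.
transitivity (z * (1 - (u * a%:Z + v * b%:Z))); first by rewrite /w; ring.
by rewrite e subrr mulr0.
Qed.

Definition pu (p : nat) (z : int) := ~~ (p%:Z %| z)%Z.

Lemma pu_mul p a b : prime p -> pu p a -> pu p b -> pu p (a * b).
Proof. by move=> pp; rewrite /pu !dvdzE abszM Euclid_dvdM // negb_or => -> ->. Qed.

Lemma pu_exp p a k : prime p -> pu p a -> pu p (a ^+ k).
Proof.
by move=> pp; rewrite /pu !dvdzE abszX Euclid_dvdX // negb_and => ->.
Qed.

Lemma pu_prod p (r : seq nat) (F : nat -> int) : prime p ->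
  (forall i, i \in r -> pu p (F i)) -> pu p (\prod_(i <- r) F i).
Proof.
move=> pp; elim: r => [|i r IH] H.
  by rewrite big_nil /pu dvdzE dvdn1; have := prime_gt1 pp; lia.
rewrite big_cons; apply: pu_mul => //; first by apply: H; rewrite inE eqxx.
by apply: IH => j hj; apply: H; rewrite inE hj orbT.
Qed.

Lemma pu_1 p : prime p -> pu p 1.
Proof. by move=> pp; rewrite /pu dvdzE dvdn1; have := prime_gt1 pp; lia. Qed.

Lemma pu_N1 p : prime p -> pu p (-1).
Proof. by move=> pp; rewrite /pu -rpredN opprK; exact: pu_1. Qed.

Lemma pu_cong p K (a b : int) : prime p -> (0 < K)%N ->
  (a = b %[mod (p%:Z) ^+ K])%Z -> pu p b -> pu p a.
Proof.
move=> pp K0 h hb; apply/negP => ha.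
have h1 : (p%:Z %| a - b)%Z.
  apply: dvdz_trans (cdvd h); have := @dvdz_exp2l (p%:Z) 1 K K0; by rewrite expr1.
have : (p%:Z %| a - (a - b))%Z by apply: rpredB.
by rewrite opprB addrC subrK; apply/negP.
Qed.

Lemma pu_1pow p d : prime p -> (0 < d)%N -> pu p (1 - (p%:Z) ^+ d).
Proof.
move=> pp d0; apply/negP => h.
have hp : (p%:Z %| (p%:Z) ^+ d)%Z by rewrite -(subnKC d0) exprS dvdz_mulr.
have : (p%:Z %| (1 - (p%:Z) ^+ d) + (p%:Z) ^+ d)%Z by apply: rpredD.
by rewrite subrK; apply/negP; exact: pu_1.
Qed.

Lemma pu_pow1 p d : prime p -> (0 < d)%N -> pu p ((p%:Z) ^+ d - 1).
Proof.
move=> pp d0; rewrite /pu -rpredN opprB; exact: pu_1pow.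
Qed.

Lemma euler_int p K (z : int) : prime p -> (0 < K)%N -> pu p z ->
  (z ^+ totient (p ^ K) = 1 %[mod (p%:Z) ^+ K])%Z.
Proof.
move=> pp K0 hz.
set N := (p ^ K)%N.
have N0 : (0 < N)%N by rewrite expn_gt0 prime_gt0.
have Ez : (p%:Z) ^+ K = N%:Z by rewrite pexpz.
rewrite Ez.
have r0 : 0 <= (z %% N%:Z)%Z by apply: modz_ge0; lia.
set zn := `|(z %% N%:Z)%Z|%N.
have ezn : (z %% N%:Z)%Z = zn%:Z by rewrite /zn gez0_abs.
have puzn : pu p zn%:Z.
  apply: (pu_cong pp K0) hz; rewrite Ez -ezn.
  by rewrite modz_mod.
have czn : coprime zn N.
  rewrite /N coprime_pexpr // coprime_sym prime_coprime //.
have eu := Euler_exp_totient czn.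
by rewrite -modzXm ezn pexpz modz_nat eu -modz_nat.
Qed.

Lemma lemBC p K e (c d : int) : prime p -> (1 < K)%N ->
  coprime e (p * (p - 1)) -> pu p c -> pu p d ->
  exists w : int, (w ^+ e * c = d %[mod (p%:Z) ^+ K])%Z.
Proof.
move=> pp K1 ce hc hd.
have K0 : (0 < K)%N by lia.
set phi := totient (p ^ K).
have ephi : phi = (p.-1 * p ^ K.-1)%N by rewrite /phi totient_pfactor.
have p1 := prime_gt1 pp.
have phi2 : (2 <= phi)%N.
  rewrite ephi; have : (p ^ 1 <= p ^ K.-1)%N by rewrite leq_pexp2l; lia.
  rewrite expn1; nia.
have cphi : coprime e phi.
  move: ce; rewrite coprimeMr => /andP[c1 c2].
  by rewrite ephi coprimeMr -subn1 c2 coprimeXr.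
have [u [_ hu]] := lemA 1 cphi (ltnW phi2).
case/dvdzP: hu => t ht.
have [s es] : exists s : nat, (u * e = 1 + phi * s)%N.
  have tle : t <= 0.
    have : 0 <= (u * e)%N%:Z by [].
    rewrite PoszM; nia.
  exists `|t|%N; have : (`|t|%N%:Z = - t) by rewrite lez0_abs.
  nia.
set T := d * c ^+ phi.-1.
have hT : pu p T by apply: pu_mul => //; apply: pu_exp.
exists (T ^+ u).
have eT := euler_int pp K0 hT; have ec := euler_int pp K0 hc.
rewrite -exprM es exprD expr1 exprM.
apply: (@eq_trans _ _ ((T * 1 ^+ s * c) %% (p%:Z ^+ K))%Z).
  by apply: cmul => //; apply: cmul => //; exact: cexp.
rewrite expr1n mulr1 /T -mulrA -exprSr prednK; last by lia.
have -> : (d %% (p%:Z ^+ K))%Z = ((d * 1) %% (p%:Z ^+ K))%Z by rewrite mulr1.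
exact: cmul.
Qed.

Definition VU (p K : nat) (z : int) (c : nat) (u : int) :=
  exists z', z = (p%:Z) ^+ c * z' /\ (z' = u %[mod (p%:Z) ^+ K])%Z.

Lemma VU_mul p K z1 c1 u1 z2 c2 u2 : VU p K z1 c1 u1 -> VU p K z2 c2 u2 ->
  VU p K (z1 * z2) (c1 + c2) (u1 * u2).
Proof.
move=> [a [e1 h1]] [b [e2 h2]]; exists (a * b); split; last exact: cmul.
by rewrite e1 e2 exprD; ring.
Qed.

Lemma VU_exp p K z c u k : VU p K z c u -> VU p K (z ^+ k) (c * k) (u ^+ k).
Proof.
move=> [a [e1 h1]]; exists (a ^+ k); split; last exact: cexp.
by rewrite e1 exprMn exprM.
Qed.

Lemma VU_one p K : VU p K 1 0 1.
Proof. by exists 1; rewrite expr0 mul1r. Qed.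

Lemma VU_prod p K (r : seq nat) (F : nat -> int) (c : nat -> nat) (u : nat -> int) :
  (forall i, i \in r -> VU p K (F i) (c i) (u i)) ->
  VU p K (\prod_(i <- r) F i) (\sum_(i <- r) c i) (\prod_(i <- r) u i).
Proof.
elim: r => [|i r IH] H; first by rewrite !big_nil; exact: VU_one.
rewrite !big_cons; apply: VU_mul; first by apply: H; rewrite inE eqxx.
by apply: IH => j hj; apply: H; rewrite inE hj orbT.
Qed.

Lemma VU_eq p K z c u c' u' : VU p K z c u -> c = c' ->
  (u = u' %[mod (p%:Z) ^+ K])%Z -> VU p K z c' u'.
Proof. by move=> [a [e1 h1]] <- hu; exists a; split; rewrite // h1. Qed.

Lemma prod_pick (a b i : nat) (F : nat -> int) : (a <= i < b)%N ->
  \prod_(a <= j < b) F j = F i * \prod_(a <= j < b) (if j == i then 1 else F j).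
Proof.
move=> hi; rewrite (bigD1_seq i) ?mem_index_iota ?iota_uniq //.
by congr (_ * _); rewrite big_mkcond; apply: eq_bigr => j _; rewrite if_neg.
Qed.

Section TypeI.
Variables (p q1 q2 q3 K i n : nat) (w : int).
Hypothesis pp : prime p.
Hypothesis i1 : (1 <= i)%N.
Hypothesis iq : (i <= q1)%N.
Hypothesis Kn : (K <= n)%N.
Local Notation P := (p%:Z).
Local Notation x := (P ^+ i * (P ^+ n * w - 1)).

Definition cj (j : nat) : nat := if (j < i)%N then j else i.
Definition uj (j : nat) : int := if (j < i)%N then 1 - P ^+ (i - j) else P ^+ (j - i) - 1.

Lemma Vx : VU p K x i (-1).
Proof.
exists (P ^+ n * w - 1); split => //; exact: cadd0 (pK0 _ _ Kn).
Qed.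

Lemma Vi : VU p K (x + P ^+ i) (i + n) w.
Proof. by exists w; split => //; rewrite exprD; ring. Qed.

Lemma Vfac j : j != i -> VU p K (x + P ^+ j) (cj j) (uj j).
Proof.
move=> nji; rewrite /cj /uj; case: ltnP => hji.
  set d := (i - j)%N; have ei : i = (j + d)%N by rewrite /d; lia.
  exists (P ^+ (d + n) * w + (1 - P ^+ d)); split.
    by rewrite ei !exprD; ring.
  by apply: cadd0; apply: pK0; lia.
set d := (j - i)%N; have ej : j = (i + d)%N by rewrite /d; lia.
exists (P ^+ n * w + (P ^+ d - 1)); split.
  by rewrite {1}ej !exprD; ring.
exact: cadd0 (pK0 _ _ Kn).
Qed.

End TypeI.

Lemma pu_uj p i j : prime p -> j != i -> pu p (uj p i j).
Proof.
move=> pp nji; rewrite /uj; case: ltnP => hji.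
  by apply: pu_1pow => //; lia.
by apply: pu_pow1 => //; move: nji; rewrite neq_ltn; lia.
Qed.

Lemma f_typei p q1 q2 q3 K i : prime p -> (1 <= i)%N -> (i <= q1)%N ->
  exists C V, pu p V /\ (exists s, C = q1 * s + i * (q2 * q3))%N /\
  forall n w, (K <= n)%N ->
    VU p K (f_poly p q1 q2 q3 ((p%:Z) ^+ i * ((p%:Z) ^+ n * w - 1)))
       (C + n * (q1 * q3))%N (w ^+ (q1 * q3) * V).
Proof.
move=> pp i1 iq.
pose c' j := if j == i then 0%N else (cj i j * (q1 * q3))%N.
pose u' j := if j == i then 1 else (uj p i j) ^+ (q1 * q3).
pose S := (\sum_(1 <= j < q1.+1) c' j)%N.
exists (i * (q1 * q2) + (i * (q1 * q3) + S) + i * (q2 * q3))%N.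
exists ((-1) ^+ (q1 * q2) * \prod_(1 <= j < q1.+1) u' j *
        ((p%:Z) ^+ (q1.+1 - i) - 1) ^+ (q2 * q3)).
split.
  apply: pu_mul => //; last by apply: pu_exp => //; apply: pu_pow1 => //; lia.
  apply: pu_mul => //; first by apply: pu_exp => //; exact: pu_N1.
  apply: pu_prod => // j _; rewrite /u'; case: eqP => [_|/eqP nji].
    exact: pu_1.
  by apply: pu_exp => //; apply: pu_uj.
split.
  have dS : (q1 %| S)%N.
    apply: dvdn_sum => j _; rewrite /c'; case: eqP => _; first exact: dvdn0.
    by apply: dvdn_mull; apply: dvdn_mulr.
  exists (i * q2 + i * q3 + S %/ q1)%N.
  move: (divnK dS); move: (S %/ q1)%N => k <-; ring.
move=> n w Kn.
rewrite /f_poly (@prod_pick 1 q1.+1 i); last by lia.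
have Vl := @Vfac p q1 K i n w pp i1 iq Kn q1.+1 _.
rewrite /cj /uj (_ : (q1.+1 < i)%N = false) in Vl; last by lia.
apply: VU_eq.
- apply: VU_mul; last by apply: VU_exp; apply: Vl; lia.
  apply: VU_mul; first by apply: VU_exp; exact: Vx.
  apply: VU_mul; first by apply: VU_exp; exact: Vi.
  apply: (@VU_prod p K _ _ c' u') => j hj; rewrite /c' /u'; case: eqP => [_|/eqP nji].
    exact: VU_one.
  by apply: VU_exp; apply: (Vfac w pp i1 iq Kn).
- rewrite /S; ring.
- by congr (_ %% _)%Z; ring.
Qed.

Lemma f_type0 p q1 q2 q3 K : prime p ->
  exists C, (exists s, C = q1 * s + q2 * q3)%N /\
  forall m, (K + q1.+1 <= m)%N ->
    VU p K (f_poly p q1 q2 q3 ((p%:Z) ^+ m)) (C + m * (q1 * q2))%N 1.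
Proof.
move=> pp.
pose S := (\sum_(1 <= j < q1.+1) (j * (q1 * q3)))%N.
exists (S + q1.+1 * (q2 * q3))%N; split.
  have dS : (q1 %| S)%N.
    by apply: dvdn_sum => j _; apply: dvdn_mull; apply: dvdn_mulr.
  exists (S %/ q1 + q2 * q3)%N.
  move: (divnK dS); move: (S %/ q1)%N => k <-; ring.
move=> m Km.
have Vf : forall j, (j <= q1.+1)%N -> VU p K ((p%:Z) ^+ m + (p%:Z) ^+ j) j 1.
  move=> j hj; set d := (m - j)%N; have em : m = (j + d)%N by rewrite /d; lia.
  exists ((p%:Z) ^+ d * 1 + 1); split.
    by rewrite {1}em exprD; ring.
  by apply: cadd0; apply: pK0; lia.
rewrite /f_poly; apply: VU_eq.
- apply: VU_mul; last by apply: VU_exp; apply: Vf.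
  apply: VU_mul.
    by apply: VU_exp; exists 1; rewrite mulr1.
  apply: (@VU_prod p K _ _ (fun j => (j * (q1 * q3))%N) (fun j => 1)) => j.
  rewrite mem_index_iota => /andP[_ hj].
  apply: VU_eq; first (apply: VU_exp; apply: Vf; lia); by rewrite ?expr1n.
- rewrite /S; ring.
- by rewrite big1_eq !expr1n !mulr1.
Qed.

Definition polycong (G : int -> int) := forall (M x x' : int),
  (x = x' %[mod M])%Z -> (G x = G x' %[mod M])%Z.

Definition Good (p : nat) (h : int -> int) := forall (v a b : int) (K : nat),
  pu p a -> pu p b -> exists x y (al be : nat) (X' Y' : int),
  h x = (p%:Z) ^+ al * X' /\ h y = (p%:Z) ^+ be * Y' /\ pu p Y' /\
  al%:Z - be%:Z = v /\ ((p%:Z) ^+ K %| X' * b - Y' * a)%Z.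

Section WithG.
Variables (p q1 q2 q3 : nat) (G : int -> int).
Hypothesis pp : prime p.
Hypothesis HG1 : polycong G.
Hypothesis HG2 : G 0 = 1.
Local Notation P := (p%:Z).

Lemma h_typei K i : (1 <= i)%N -> (i <= q1)%N ->
  exists C V, pu p V /\ (exists s, C = q1 * s + i * (q2 * q3))%N /\
  forall n w, (K <= n)%N ->
    VU p K (f_poly p q1 q2 q3 (P ^+ i * (P ^+ n * w - 1)) *
            G (P ^+ i * (P ^+ n * w - 1)))
       (C + n * (q1 * q3))%N (w ^+ (q1 * q3) * V).
Proof.
move=> i1 iq.
have [C [V [pV [hs H]]]] := f_typei q2 q3 K pp i1 iq.
exists C, (V * G (- P ^+ i)); split; last split => //.
  apply: pu_mul => //; apply: (@pu_cong p 1 _ 1 pp) => //; last exact: pu_1.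
  rewrite -HG2; apply: HG1.
  have := @pK0 p 1 i (-1) i1; by rewrite mulrN1.
move=> n w Kn.
have VG : VU p K (G (P ^+ i * (P ^+ n * w - 1))) 0 (G (- P ^+ i)).
  exists (G (P ^+ i * (P ^+ n * w - 1))); split; first by rewrite expr0 mul1r.
  apply: HG1.
  have -> : P ^+ i * (P ^+ n * w - 1) = P ^+ (i + n) * w + - P ^+ i.
    by rewrite exprD; ring.
  by apply: cadd0; apply: pK0; lia.
apply: VU_eq; first exact: VU_mul (H n w Kn) VG.
- by rewrite addn0.
- by rewrite mulrA.
Qed.

Lemma h_type0 K : exists C, (exists s, C = q1 * s + q2 * q3)%N /\
  forall m, (K + q1.+1 <= m)%N ->
    VU p K (f_poly p q1 q2 q3 (P ^+ m) * G (P ^+ m)) (C + m * (q1 * q2))%N 1.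
Proof.
have [C [hs H]] := f_type0 q1 q2 q3 K pp.
exists C; split => // m Km.
have VG : VU p K (G (P ^+ m)) 0 1.
  exists (G (P ^+ m)); split; first by rewrite expr0 mul1r.
  rewrite -HG2; apply: HG1; rewrite -[P ^+ m]mulr1; apply: pK0; lia.
apply: VU_eq; first exact: VU_mul (H m Km) VG.
- by rewrite addn0.
- by rewrite mulr1.
Qed.

Lemma good_h : prime q1 -> prime q2 -> prime q3 -> (q1 < q2)%N -> (q2 < q3)%N ->
  coprime (q1 * q2 * q3) (p * (p - 1)) ->
  Good p (fun x => f_poly p q1 q2 q3 x * G x).
Proof.
move=> p1 p2 p3 h12 h23 cop v a b K pa pb.
set K1 := K.+2.
have [C0 [[s0 e0] H0]] := h_type0 K1.
have dist : forall x y, prime x -> prime y -> x != y -> coprime x y.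
  by move=> x y px py nxy; rewrite prime_coprime // dvdn_prime2.
have cop1 : coprime (q2 * q3) q1.
  by rewrite coprimeMl !dist // ?gtn_eqF //; apply: ltn_trans h23.
have [u [ul hu]] := lemA v cop1 (prime_gt0 p1).
have [Ci [Vi [pVi [[si ei] HI]]]] := h_typei K1 (ltn0Sn u) ul.
have [t ht] : exists t : int, v - (Ci%:Z - C0%:Z) = t * q1%:Z.
  case/dvdzP: hu => k hk; exists (k - si%:Z + s0%:Z).
  move/eqP: hk; rewrite subr_eq => /eqP ->.
  rewrite ei e0 !PoszD !PoszM; ring.
have cop2 : coprime q3 q2 by rewrite dist // gtn_eqF.
have [u' [_ hu']] := lemA t cop2 (prime_gt0 p2).
case/dvdzP: hu' => sg hsg.
set L := (K1 + q1.+1 + `|sg|)%N.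
have q20 := prime_gt0 p2; have q30 := prime_gt0 p3.
have sgL : `|sg|%:Z <= L%:Z by rewrite /L; lia.
have sgb : sg <= `|sg|%:Z by rewrite abszE ler_norm.
have mpos : 0 <= L%:Z * q3%:Z - sg.
  have : L%:Z <= L%:Z * q3%:Z by rewrite -PoszM lez_nat leq_pmulr.
  lia.
set n := (u' + L * q2)%N.
pose m : nat := absz ((Posz L) * (Posz q3) - sg)%R.
have em : m%:Z = L%:Z * q3%:Z - sg by rewrite /m gez0_abs.
have Kn : (K1 <= n)%N.
  rewrite /n; have : (L <= L * q2)%N by rewrite leq_pmulr.
  rewrite /L; lia.
have Km : (K1 + q1.+1 <= m)%N.
  have : (K1 + q1.+1)%:Z <= m%:Z.
    rewrite em; have : L%:Z <= L%:Z * q3%:Z by rewrite -PoszM lez_nat leq_pmulr.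
    rewrite /L; lia.
  lia.
have cope : coprime (q1 * q3) (p * (p - 1)).
  by apply: coprime_dvdl cop; rewrite mulnAC dvdn_mulr.
have K1g : (1 < K1)%N by rewrite /K1.
have [w hw] := lemBC (c := Vi * b) (d := a) pp K1g cope
  (pu_mul pp pVi pb) pa.
have [X' [eX hX]] := HI n w Kn.
have [Y' [eY hY]] := H0 m Km.
exists (P ^+ u.+1 * (P ^+ n * w - 1)), (P ^+ m), (Ci + n * (q1 * q3))%N,
  (C0 + m * (q1 * q2))%N, X', Y'.
split; first exact: eX.
split; first exact: eY.
split; first by apply: (pu_cong pp _ hY); [rewrite /K1 | exact: pu_1].
split.
  move/eqP: ht; rewrite subr_eq => /eqP ev.
  move/eqP: hsg; rewrite subr_eq => /eqP et.
  rewrite ev et !PoszD !PoszM em /n PoszD PoszM; ring.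
have hKK : (K <= K1)%N by rewrite /K1; lia.
have hK := dvdz_exp2l (p%:Z) hKK.
apply: dvdz_trans hK _; apply: cdvd.
apply: (@eq_trans _ _ ((w ^+ (q1 * q3) * Vi * b) %% (P ^+ K1))%Z).
  by apply: cmul.
rewrite -mulrA hw.
have -> : (a %% (P ^+ K1))%Z = ((1 * a) %% (P ^+ K1))%Z by rewrite mul1r.
by apply: cmul.
Qed.

End WithG.

Lemma int_decomp p (z : int) : prime p -> z != 0 ->
  exists (v : nat) (a : int), z = (p%:Z) ^+ v * a /\ pu p a.
Proof.
move=> pp z0.
have hz : (0 < `|z|)%N by rewrite absz_gt0.
have [m cm em] := pfactor_coprime pp hz.
move: em; set v := logn p `|z| => em.
exists v, ((-1) ^+ (z < 0)%R * m%:Z); split.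
  by rewrite {1}[z]intEsign em PoszM pexpz; ring.
apply: pu_mul => //; first by apply: pu_exp => //; exact: pu_N1.
by rewrite /pu dvdzE !absz_nat -prime_coprime.
Qed.

Lemma dense_of_good p (h : int -> int) : prime p -> h 0 = 0 -> Good p h ->
  dense_Qp p (Rset h).
Proof.
move=> pp h0 Gd r k.
have Yne : forall be (Y' : int), pu p Y' -> (p%:Z) ^+ be * Y' != 0.
  move=> be Y' pY; rewrite mulf_neq0 ?expf_neq0 //.
    by have := prime_gt0 pp; lia.
  by apply: contraNneq pY => ->; rewrite dvdz0.
have [r0|r0] := eqVneq r 0.
  have [x [y [al [be [X' [Y' [_ [eY [pY _]]]]]]]]] := Gd 0 1 1 0%N (pu_1 pp) (pu_1 pp).
  exists 0; split; last by left.
  exists 0, y; split; first by rewrite eY Yne.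
  by rewrite h0 mul0r.
set n := numq r; set d := denq r.
have n0 : n != 0 by rewrite numq_eq0.
have d0 : d != 0 by rewrite denq_neq0.
have [v1 [a [en pa]]] := int_decomp pp n0.
have [v2 [b [ed pb]]] := int_decomp pp d0.
have [x [y [al [be [X' [Y' [eX [eY [pY [ev hdiv]]]]]]]]]] :=
  Gd (v1%:Z - v2%:Z) a b (k + v2)%N pa pb.
have hy0 : h y != 0 by rewrite eY Yne.
exists ((h x)%:~R / (h y)%:~R); split; first by exists x, y.
set c := X' * b - Y' * a.
have eg : (v1 + be = al + v2)%N by lia.
have key : h x * d - n * h y = (p%:Z) ^+ (al + v2) * c.
  transitivity ((p%:Z) ^+ (al + v2) * X' * b - (p%:Z) ^+ (v1 + be) * Y' * a).
    by rewrite eX eY en ed !exprD; ring.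
  by rewrite eg /c; ring.
have rE : r = n%:~R / d%:~R by rewrite /n /d divq_num_den.
have [c0|c0] := eqVneq c 0.
  left; rewrite rE; apply/eqP; rewrite eqr_div ?intr_eq0 //.
  rewrite -!rmorphM /=; apply/eqP; congr (_%:~R).
  by apply/eqP; rewrite -subr_eq0 key c0 mulr0.
right.
have -> : (h x)%:~R / (h y)%:~R - r = (h x * d - n * h y)%:~R / (h y * d)%:~R.
  rewrite rE rmorphB !rmorphM /=; field.
  by rewrite !intr_eq0 d0 hy0.
have pz : (p%:Z) != 0 by have := prime_gt0 pp; lia.
have Y0 : Y' != 0 by apply: contraNneq pY => ->; rewrite dvdz0.
have b0 : b != 0 by apply: contraNneq pb => ->; rewrite dvdz0.
rewrite padic_frac; last by rewrite mulf_neq0.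
  rewrite key eY ed !lzM ?mulf_neq0 ?expf_neq0 // !lz_pexp // (lz_unit pp pY) (lz_unit pp pb).
  have : (k + v2 <= lz p c)%N by rewrite -lz_dvdE.
  lia.
by rewrite key mulf_neq0 ?expf_neq0.
Qed.

Lemma dense_sub p (X Y : Type) (h : X -> int) (h' : Y -> int) :
  (forall x, exists y, h' y = h x) -> dense_Qp p (Rset h) -> dense_Qp p (Rset h').
Proof.
move=> S D r k; have [s [[x [y [hy e]]] H]] := D r k.
have [x' ex] := S x; have [y' ey] := S y.
exists s; split => //; exists x', y'; by rewrite ex ey.
Qed.

Definition G2 (p q1 q2 q3 : nat) (x : int) : int :=
  (\prod_(1 <= i < q3) ((p%:Z) ^+ i * x + 1) ^+ (q1 * q2))
  * (\prod_(q3 <= i < q3 + q2 - q1) ((p%:Z) ^+ i * x + 1) ^+ (q1 * q3))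
  * (\prod_(q3 + q2 - q1 <= i < q3 + q2 - 1) ((p%:Z) ^+ i * x + 1) ^+ (q2 * q3)).

Lemma g2_split p q1 q2 q3 x :
  g2_poly p q1 q2 q3 x 1 = f_poly p q1 q2 q3 x * G2 p q1 q2 q3 x.
Proof.
rewrite /g2_poly /f_poly /G2; under eq_bigr do rewrite mulr1.
by rewrite mulr1 !mulrA.
Qed.

Lemma G2_cong p q1 q2 q3 : polycong (G2 p q1 q2 q3).
Proof.
move=> M x x' h; rewrite /G2.
by apply: cmul; [apply: cmul|]; apply: cprod => i _; apply: cexp;
  apply: cadd => //; apply: cmul.
Qed.

Lemma G2_0 p q1 q2 q3 : G2 p q1 q2 q3 0 = 1.
Proof.
rewrite /G2 !big1 ?mulr1 // => i _; by rewrite mulr0 add0r expr1n.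
Qed.

Lemma f0 p q1 q2 q3 : (0 < q1)%N -> (0 < q2)%N -> f_poly p q1 q2 q3 0 = 0.
Proof.
move=> h1 h2.
have h : (q1 * q2 != 0)%N by rewrite muln_eq0 negb_or -!lt0n h1 h2.
by rewrite /f_poly expr0n (negbTE h) !mul0r.
Qed.

Lemma coordE n (y : 'I_n -> int) j (hj : (j < n)%N) : Defs.coord y j = y (Ordinal hj).
Proof. by rewrite /Defs.coord insubT. Qed.

Theorem theorem4p8 (p q1 q2 q3 : nat) :
  prime p -> prime q1 -> prime q2 -> prime q3 ->
  (q1 < q2)%N -> (q2 < q3)%N ->
  coprime (q1 * q2 * q3) (p * (p - 1)) ->
  (* (a) *)
  (dense_Qp p (Rset (f_poly p q1 q2 q3)) /\
   forall q : nat, prime q -> (p ^ q1.+1 < q)%N ->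
     ~ dense_Qp q (Rset (f_poly p q1 q2 q3)))
  /\
  (* (b) *)
  (dense_Qp p (Rset (g2_fun p q1 q2 q3)) /\
   forall q : nat, prime q -> (p ^ (q3 + q2 + q1 - 1) < q)%N ->
     ~ dense_Qp q (Rset (g2_fun p q1 q2 q3)))
  /\
  (* (c) *)
  (forall n : nat, (2 < n)%N ->
     dense_Qp p (Rset (gn_fun p q1 q2 q3 n)) /\
     forall q : nat, prime q -> (p ^ (q3 + q2 + q1 - 1) < q)%N ->
       ~ dense_Qp q (Rset (gn_fun p q1 q2 q3 n))).
Proof.
move=> pp p1 p2 p3 h12 h23 cop.
have q10 := prime_gt0 p1; have q20 := prime_gt0 p2.
have Df : dense_Qp p (Rset (fun x => f_poly p q1 q2 q3 x * (fun _ : int => 1) x)).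
  apply: dense_of_good => //; first by rewrite f0 // mul0r.
  by apply: good_h => // M x x' _.
have Dg : dense_Qp p (Rset (fun x => f_poly p q1 q2 q3 x * G2 p q1 q2 q3 x)).
  apply: dense_of_good => //; first by rewrite f0 // mul0r.
  apply: good_h => //; [exact: G2_cong | exact: G2_0].
split; [split|split; [split|]].
- apply: dense_sub Df => x; exists x; by rewrite mulr1.
- move=> q pq hq; apply: (@nondense_gen _ _ q q1 q2 q3) => // x; exact: Mf.
- apply: dense_sub Dg => x; exists (x, 1); by rewrite /g2_fun g2_split.
- move=> q pq hq; apply: (@nondense_gen _ _ q q1 q2 q3) => // -[x1 x2].
  exact: Mg2.
move=> n n2; split.
  apply: dense_sub Dg => x.
  exists (fun i : 'I_n => if val i == 0%N then x else 1).
  have n0 : (0 < n)%N by lia.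
  have n1 : (1 < n)%N by lia.
  rewrite /gn_fun (coordE _ n0) (coordE _ n1).
  rewrite /= big1_seq ?expr1n ?mulr1 ?g2_split //.
  move=> i /andP[_]; rewrite mem_index_iota => /andP[i2 iN].
  by rewrite (coordE _ iN) /=; case: eqP => //; lia.
move=> q pq hq; apply: (@nondense_gen _ _ q q1 q2 q3) => // x; exact: Mgn.
Qed.
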